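(* Let $\Phi$ be a dictionary with coherence $\mu$, let $m\ge1$ with $m<\tfrac12(\mu^{-1}+1)$, and let $y=\Phi x^*$ be an $m$-sparse signal with $\|x^*\|_0\le m$ and support $\Lambda_{opt}$. Let $\beta>0$ with $\|x^*\|_1\le\beta$. Then the iterates $x_k$ of the Frank-Wolfe algorithm for Problem (P$_\beta$) converge to $x^*$ as $k\to\infty$.
   Context: A dictionary is a matrix $\Phi=[\varphi_1,\dots,\varphi_n]\in\mathbb{R}^{d\times n}$ whose columns (atoms) satisfy $\|\varphi_i\|_2=1$. Its coherence is $\mu=\max_{j\neq k}|\langle\varphi_j,\varphi_k\rangle|$. A signal $y\in\mathbb{R}^d$ is $m$-sparse if $y=\Phi x^*$ for some $x^*\in\mathbb{R}^n$ with at most $m$ nonzero entries; when $m<\tfrac12(\mu^{-1}+1)$ such an $x^*$ is unique, and its support is denoted $\Lambda_{opt}$. Problem (P$_\beta$): minimize $f(x)=\tfrac12\|y-\Phi x\|_2^2$ over $B_1(\beta)=\{x\in\mathbb{R}^n:\|x\|_1\le\beta\}$. Frank-Wolfe algorithm for (P$_\beta$): set $x_0=0$. For $k=0,1,2,\dots$: let $r_k=y-\Phi x_k$; choose $i_k\in\arg\max_{i}|\langle\varphi_i,r_k\rangle|$ (any maximizer); set $s_k=\operatorname{sign}(\langle\varphi_{i_k},r_k\rangle)\,\beta\, e_{i_k}$ ($e_i$ the canonical basis vectors, $\operatorname{sign}(0)\in\{\pm1\}$ arbitrary); choose $\gamma_k\in\arg\min_{\gamma\in[0,1]}\|y-\Phi(x_k+\gamma(s_k-x_k))\|_2^2$;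 set $x_{k+1}=x_k+\gamma_k(s_k-x_k)$. *)

(* Defs.v *)
From Stdlib Require Import Reals Lra Lia.
Open Scope R_scope.

(* Vectors in R^k are functions nat -> R (only indices < k matter).
   A d x n matrix Phi is a function Phi i j (row i < d, column j < n). *)

Fixpoint rsum (k : nat) (f : nat -> R) : R :=
  match k with
  | O => 0
  | S k' => rsum k' f + f k'
  end.

(* finite max of f 0, ..., f (k-1), with value 0 on the empty range
   (used only on nonnegative quantities) *)
Fixpoint rmax (k : nat) (f : nat -> R) : R :=
  match k with
  | O => 0
  | S k' => Rmax (rmax k' f) (f k')
  end.

Definition ip (d : nat) (u v : nat -> R) : R := rsum d (fun i => u i * v i).
Definition norm2 (d : nat) (u : nat -> R) : R := sqrt (ip d u u).
Definition norm1 (n : nat) (x : nat -> R) : R := rsum n (fun j => Rabs (x j)).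

Fixpoint l0 (n : nat) (x : nat -> R) : nat :=
  match n with
  | O => O
  | S n' => (l0 n' x + if Req_EM_T (x n') 0 then 0 else 1)%nat
  end.

Definition col (Phi : nat -> nat -> R) (j : nat) : nat -> R := fun i => Phi i j.

Definition mulv (n : nat) (Phi : nat -> nat -> R) (x : nat -> R) : nat -> R :=
  fun i => rsum n (fun j => Phi i j * x j).

Definition vsub (u v : nat -> R) : nat -> R := fun i => u i - v i.

Definition e_vec (i : nat) : nat -> R := fun j => if Nat.eq_dec j i then 1 else 0.

Definition dictionary (d n : nat) (Phi : nat -> nat -> R) : Prop :=
  forall j, (j < n)%nat -> norm2 d (col Phi j) = 1.

(* coherence  mu = max_{j <> k} |<phi_j, phi_k>|  (0 if n <= 1) *)
Definition coherence (d n : nat) (Phi : nat -> nat -> R) : R :=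
  rmax n (fun j => rmax n (fun k =>
    if Nat.eq_dec j k then 0 else Rabs (ip d (col Phi j) (col Phi k)))).

Definition fobj (d n : nat) (Phi : nat -> nat -> R) (y x : nat -> R) : R :=
  / 2 * (norm2 d (vsub y (mulv n Phi x))) ^ 2.

(* One Frank-Wolfe step from xk to xk1 for (P_beta), with any admissible
   choice of maximizer i_k, of sign (arbitrary when the correlation is 0),
   and of step gamma_k in the argmin over [0,1]. *)
Definition fw_step (d n : nat) (Phi : nat -> nat -> R) (y : nat -> R) (beta : R)
    (xk xk1 : nat -> R) : Prop :=
  let r := vsub y (mulv n Phi xk) in
  exists (ik : nat) (sg gam : R),
    (ik < n)%nat /\
    (forall i, (i < n)%nat -> Rabs (ip d (col Phi i) r) <= Rabs (ip d (col Phi ik) r)) /\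
    (sg = 1 \/ sg = -1) /\
    (0 < ip d (col Phi ik) r -> sg = 1) /\
    (ip d (col Phi ik) r < 0 -> sg = -1) /\
    let sk := fun j => sg * beta * e_vec ik j in
    let upd := fun g : R => fun j => xk j + g * (sk j - xk j) in
    0 <= gam <= 1 /\
    (forall g, 0 <= g <= 1 ->
       fobj d n Phi y (upd gam) <= fobj d n Phi y (upd g)) /\
    xk1 = upd gam.

Definition fw_iterates (d n : nat) (Phi : nat -> nat -> R) (y : nat -> R) (beta : R)
    (x : nat -> nat -> R) : Prop :=
  x O = (fun _ => 0) /\ forall k, fw_step d n Phi y beta (x k) (x (S k)).

(* Main.v *)
Require Import Defs.
From Stdlib Require Import Reals Lra Lia Classical FunctionalExtensionality.
Open Scope R_scope.

Lemma rsum_ext k f g : (forall j, (j<k)%nat -> f j = g j) -> rsum k f = rsum k g.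
Proof. induction k; simpl; intros H; [reflexivity|].
rewrite IHk by (intros; apply H; lia). rewrite H by lia. reflexivity. Qed.

Lemma rsum_zero k f : (forall j, (j<k)%nat -> f j = 0) -> rsum k f = 0.
Proof. induction k; simpl; intros H; [reflexivity|].
rewrite IHk by (intros; apply H; lia). rewrite H by lia. lra. Qed.

Lemma rsum_plus k f g : rsum k (fun j => f j + g j) = rsum k f + rsum k g.
Proof. induction k; simpl; [lra|]. rewrite IHk; lra. Qed.

Lemma rsum_minus k f g : rsum k (fun j => f j - g j) = rsum k f - rsum k g.
Proof. induction k; simpl; [lra|]. rewrite IHk; lra. Qed.

Lemma rsum_scal k c f : rsum k (fun j => c * f j) = c * rsum k f.
Proof. induction k; simpl; [lra|]. rewrite IHk; lra. Qed.

Lemma rsum_scalr k c f : rsum k (fun j => f j * c) = rsum k f * c.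
Proof. induction k; simpl; [lra|]. rewrite IHk; lra. Qed.

Lemma rsum_le k f g : (forall j, (j<k)%nat -> f j <= g j) -> rsum k f <= rsum k g.
Proof. induction k; simpl; intros H; [lra|].
pose proof (IHk ltac:(intros; apply H; lia)). pose proof (H k ltac:(lia)). lra. Qed.

Lemma rsum_ge0 k f : (forall j, (j<k)%nat -> 0 <= f j) -> 0 <= rsum k f.
Proof. intros H. replace 0 with (rsum k (fun _ => 0)). apply rsum_le; auto.
apply rsum_zero; auto. Qed.

Lemma rsum_abs k f : Rabs (rsum k f) <= rsum k (fun j => Rabs (f j)).
Proof. induction k; simpl. rewrite Rabs_R0; lra.
pose proof (Rabs_triang (rsum k f) (f k)). lra. Qed.

Lemma rsum_swap a b f : rsum a (fun i => rsum b (fun j => f i j)) = rsum b (fun j => rsum a (fun i => f i j)).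
Proof. induction a; simpl.
- symmetry; apply rsum_zero; auto.
- rewrite IHa, <- rsum_plus. reflexivity. Qed.

Lemma rsum_delta k j a : (j<k)%nat -> rsum k (fun l => if Nat.eq_dec l j then a else 0) = a.
Proof. induction k; intros H; [lia|]. simpl. destruct (Nat.eq_dec k j).
- subst. rewrite rsum_zero; [lra|]. intros l Hl. destruct (Nat.eq_dec l j); [lia|auto].
- rewrite IHk by lia. lra. Qed.

Lemma rsum_evec k j h : (j<k)%nat -> rsum k (fun l => e_vec j l * h l) = h j.
Proof. intros H. rewrite <- (rsum_delta k j (h j)) by auto. apply rsum_ext.
intros l _. unfold e_vec. destruct (Nat.eq_dec l j); subst; lra. Qed.

Lemma rsum_ge_term k f i : (forall j, (j<k)%nat -> 0 <= f j) -> (i<k)%nat -> f i <= rsum k f.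
Proof. induction k; intros H Hi; [lia|]. simpl.
assert (0 <= rsum k f) by (apply rsum_ge0; intros; apply H; lia).
destruct (Nat.eq_dec i k). subst; lra.
pose proof (IHk ltac:(intros; apply H; lia) ltac:(lia)). pose proof (H k ltac:(lia)). lra. Qed.

Lemma rmax_ge k f i : (i<k)%nat -> f i <= rmax k f.
Proof. induction k; intros Hi; [lia|]. simpl. destruct (Nat.eq_dec i k).
subst; apply Rmax_r. pose proof (IHk ltac:(lia)). pose proof (Rmax_l (rmax k f) (f k)); lra. Qed.

Lemma rmax_ge0 k f : 0 <= rmax k f.
Proof. induction k; simpl; [lra|]. pose proof (Rmax_l (rmax k f) (f k)); lra. Qed.

Lemma argmax k f : (0<k)%nat -> exists i, (i<k)%nat /\ forall j, (j<k)%nat -> f j <= f i.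
Proof. induction k; intros H; [lia|]. destruct k.
- exists 0%nat; split; [lia|]. intros j Hj; assert (j=0%nat) by lia; subst; lra.
- destruct (IHk ltac:(lia)) as [i [Hi Hm]].
  destruct (Rle_dec (f (S k)) (f i)).
  + exists i; split; [lia|]. intros j Hj. destruct (Nat.eq_dec j (S k)); subst; auto. apply Hm; lia.
  + exists (S k); split; [lia|]. intros j Hj. destruct (Nat.eq_dec j (S k)); subst; [lra|].
    pose proof (Hm j ltac:(lia)); lra. Qed.

Lemma l0_sub k w v : (forall j, (j<k)%nat -> v j = 0 -> w j = 0) -> (l0 k w <= l0 k v)%nat.
Proof. induction k; intros H; simpl; [lia|].
pose proof (IHk ltac:(intros; apply H; auto; lia)).
destruct (Req_EM_T (w k) 0); destruct (Req_EM_T (v k) 0); try lia.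
exfalso; apply n; apply H; auto. Qed.

Lemma l0_sub1 k w v i : (forall j, (j<k)%nat -> j <> i -> v j = 0 -> w j = 0) -> (l0 k w <= S (l0 k v))%nat.
Proof. induction k; intros H; simpl; [lia|].
pose proof (IHk ltac:(intros; apply H; auto; lia)).
destruct (Req_EM_T (w k) 0); destruct (Req_EM_T (v k) 0); try lia.
destruct (Nat.eq_dec k i).
- subst. assert (l0 i w <= l0 i v)%nat. apply l0_sub. intros j Hj Hv. apply H; auto; lia. lia.
- exfalso; apply n; apply H; auto. Qed.

Lemma l0_bound k w M : (forall j, (j<k)%nat -> Rabs (w j) <= M) -> 0 <= M ->
  rsum k (fun j => Rabs (w j)) <= INR (l0 k w) * M.
Proof. induction k; intros H HM; simpl; [lra|].
pose proof (IHk ltac:(intros; apply H; lia) HM). rewrite plus_INR.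
destruct (Req_EM_T (w k) 0). rewrite e, Rabs_R0; simpl; lra.
pose proof (H k ltac:(lia)). simpl. lra. Qed.

Lemma cs_l0 k v : (rsum k (fun j => Rabs (v j)))^2 <= INR (l0 k v) * rsum k (fun j => v j * v j).
Proof. induction k; simpl; [lra|]. rewrite plus_INR.
set (A := rsum k (fun j => Rabs (v j))) in *. set (Q := rsum k (fun j => v j * v j)) in *.
set (N := INR (l0 k v)) in *.
assert (HA : 0 <= A) by (apply rsum_ge0; intros; apply Rabs_pos).
assert (HQ : 0 <= Q) by (apply rsum_ge0; intros; nra).
assert (HN : 0 <= N) by apply pos_INR.
destruct (Req_EM_T (v k) 0).
- rewrite e, Rabs_R0. simpl. nra.
- simpl. assert (Ht : v k * v k = Rabs (v k) * Rabs (v k)).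
  { rewrite <- Rabs_mult. rewrite Rabs_right; nra. }
  rewrite Ht. set (t := Rabs (v k)). assert (0 <= t) by apply Rabs_pos.
  destruct (Req_dec N 0).
  + rewrite H0 in *. assert (A = 0) by nra. subst A. rewrite H1. nra.
  + assert (0 < N) by lra.
    assert (N * (2*A*t) <= N * (Q + N*t*t)) by (pose proof (pow2_ge_0 (A - N*t)); simpl in *; nra).
    assert (2*A*t <= Q + N*t*t) by (apply Rmult_le_reg_l with N; lra).
    nra. Qed.

Lemma ip_sym d u v : ip d u v = ip d v u.
Proof. unfold ip. apply rsum_ext; intros; ring. Qed.

Lemma ip_ge0 d u : 0 <= ip d u u.
Proof. unfold ip. apply rsum_ge0; intros; nra. Qed.

Lemma norm2_sq d u : norm2 d u ^ 2 = ip d u u.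
Proof. unfold norm2. apply pow2_sqrt, ip_ge0. Qed.

Lemma ip_mulv d n Phi u w :
  ip d (mulv n Phi u) w = rsum n (fun j => u j * ip d (col Phi j) w).
Proof. unfold ip, mulv, col.
rewrite (rsum_ext d _ (fun i => rsum n (fun j => Phi i j * u j * w i))).
2:{ intros; rewrite <- rsum_scalr; reflexivity. }
rewrite rsum_swap. apply rsum_ext; intros. rewrite <- rsum_scal. apply rsum_ext; intros; ring. Qed.

Definition G d (Phi : nat -> nat -> R) j l := ip d (col Phi j) (col Phi l).

Lemma gram d n Phi u v :
  ip d (mulv n Phi u) (mulv n Phi v) = rsum n (fun j => rsum n (fun l => u j * v l * G d Phi j l)).
Proof. rewrite ip_mulv. apply rsum_ext; intros j _.
rewrite ip_sym, ip_mulv, <- rsum_scal. apply rsum_ext; intros. unfold G. rewrite ip_sym. ring. Qed.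

Lemma G_diag d n Phi j : dictionary d n Phi -> (j<n)%nat -> G d Phi j j = 1.
Proof. intros H Hj. pose proof (H j Hj). unfold G. rewrite <- norm2_sq, H0. ring. Qed.

Lemma G_off d n Phi j l : (j<n)%nat -> (l<n)%nat -> j <> l -> Rabs (G d Phi j l) <= coherence d n Phi.
Proof. intros Hj Hl Hjl. unfold coherence.
eapply Rle_trans; [| apply (rmax_ge n _ j Hj)]. simpl.
eapply Rle_trans; [| apply (rmax_ge n _ l Hl)]. simpl.
destruct (Nat.eq_dec j l); [contradiction|]. unfold G; lra. Qed.

Lemma G_le1 d n Phi j l : dictionary d n Phi -> coherence d n Phi <= 1 -> (j<n)%nat -> (l<n)%nat ->
  Rabs (G d Phi j l) <= 1.
Proof. intros. destruct (Nat.eq_dec j l). subst. rewrite (G_diag d n); auto. rewrite Rabs_R1; lra.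
pose proof (G_off d n Phi j l); auto. pose proof (H3 H1 H2 n0). lra. Qed.

Definition sA1 n (v : nat -> R) := rsum n (fun j => Rabs (v j)).
Definition sQ2 n (v : nat -> R) := rsum n (fun j => v j * v j).

Lemma QLB d n Phi v : dictionary d n Phi ->
  (1 + coherence d n Phi) * sQ2 n v - coherence d n Phi * (sA1 n v)^2 <= ip d (mulv n Phi v) (mulv n Phi v).
Proof. intros Hd. set (mu := coherence d n Phi). rewrite gram.
assert (Hmu : 0 <= mu) by apply rmax_ge0.
assert (E : rsum n (fun j => rsum n (fun l => - mu * (Rabs (v j) * Rabs (v l)) +
        (if Nat.eq_dec l j then (1+mu) * (v j * v j) else 0)))
        = (1 + mu) * sQ2 n v - mu * (sA1 n v)^2).
{ rewrite (rsum_ext n _ (fun j => (- mu * sA1 n v) * Rabs (v j) + (1+mu) * (v j * v j))).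
  - rewrite rsum_plus, !rsum_scal. unfold sA1, sQ2. ring.
  - intros j Hj. rewrite rsum_plus, rsum_delta by auto. rewrite rsum_scal, rsum_scal. unfold sA1. ring. }
rewrite <- E. apply rsum_le; intros j Hj. apply rsum_le; intros l Hl.
destruct (Nat.eq_dec l j).
- subst. rewrite (G_diag d n) by auto.
  assert (Rabs (v j) * Rabs (v j) = v j * v j) by (rewrite <- Rabs_mult; apply Rabs_right; nra).
  rewrite H. lra.
- pose proof (G_off d n Phi j l Hj Hl ltac:(auto)).
  pose proof (Rabs_pos (v j)). pose proof (Rabs_pos (v l)).
  assert (Rabs (v j * v l * G d Phi j l) <= mu * (Rabs (v j) * Rabs (v l))).
  { rewrite !Rabs_mult. fold mu in H. rewrite (Rmult_comm mu). apply Rmult_le_compat_l; [nra|auto]. }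
  pose proof (Rle_abs (- (v j * v l * G d Phi j l))). rewrite Rabs_Ropp in H3. lra. Qed.

Lemma QUB d n Phi v : dictionary d n Phi -> coherence d n Phi <= 1 ->
  ip d (mulv n Phi v) (mulv n Phi v) <= (sA1 n v)^2.
Proof. intros Hd Hm. rewrite gram.
replace ((sA1 n v)^2) with (rsum n (fun j => rsum n (fun l => Rabs (v j) * Rabs (v l)))).
2:{ rewrite (rsum_ext n _ (fun j => sA1 n v * Rabs (v j))). rewrite rsum_scal. unfold sA1; ring.
    intros. rewrite rsum_scal. unfold sA1; ring. }
apply rsum_le; intros j Hj. apply rsum_le; intros l Hl.
pose proof (G_le1 d n Phi j l Hd Hm Hj Hl).
pose proof (Rle_abs (v j * v l * G d Phi j l)). rewrite !Rabs_mult in H0.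
pose proof (Rabs_pos (v j)). pose proof (Rabs_pos (v l)). pose proof (Rabs_pos (G d Phi j l)).
assert (Rabs (v j) * Rabs (v l) * Rabs (G d Phi j l) <= Rabs (v j) * Rabs (v l) * 1)
  by (apply Rmult_le_compat_l; nra). lra. Qed.

Lemma corr_eq d n Phi w i : ip d (col Phi i) (mulv n Phi w) = rsum n (fun l => w l * G d Phi l i).
Proof. rewrite ip_sym, ip_mulv. reflexivity. Qed.

Lemma erc_out d n Phi w i : (i<n)%nat -> w i = 0 ->
  Rabs (ip d (col Phi i) (mulv n Phi w)) <= coherence d n Phi * sA1 n w.
Proof. intros Hi Hw. rewrite corr_eq. eapply Rle_trans; [apply rsum_abs|].
unfold sA1. rewrite <- rsum_scal. apply rsum_le; intros l Hl. rewrite Rabs_mult.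
destruct (Nat.eq_dec l i). subst. rewrite Hw, Rabs_R0. lra.
pose proof (G_off d n Phi l i Hl Hi n0). pose proof (Rabs_pos (w l)).
 rewrite (Rmult_comm (coherence d n Phi)). apply Rmult_le_compat_l; auto. Qed.

Lemma erc_in d n Phi w i : dictionary d n Phi -> (i<n)%nat ->
  Rabs (w i) - coherence d n Phi * (sA1 n w - Rabs (w i)) <= Rabs (ip d (col Phi i) (mulv n Phi w)).
Proof. intros Hd Hi. rewrite corr_eq.
set (mu := coherence d n Phi).
assert (Rabs (rsum n (fun l => w l * G d Phi l i)) - Rabs (w i) >= - (mu * (sA1 n w - Rabs (w i)))); [|lra].
assert (Rabs (rsum n (fun l => w l * G d Phi l i) - w i) <= mu * (sA1 n w - Rabs (w i))).
2:{ pose proof (Rabs_triang (rsum n (fun l => w l * G d Phi l i) - w i) (w i)).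
    replace (rsum n (fun l => w l * G d Phi l i) - w i + w i) with (rsum n (fun l => w l * G d Phi l i)) in H0 by ring.
    pose proof (Rabs_triang_inv (w i) (rsum n (fun l => w l * G d Phi l i))). 
    rewrite Rabs_minus_sym in H. lra. }
rewrite <- (rsum_delta n i (w i)) at 1 by auto. rewrite <- rsum_minus.
eapply Rle_trans; [apply rsum_abs|].
replace (mu * (sA1 n w - Rabs (w i))) with
  (rsum n (fun l => mu * Rabs (w l) - (if Nat.eq_dec l i then mu * Rabs (w i) else 0))).
2:{ rewrite rsum_minus, rsum_delta, rsum_scal by auto. unfold sA1; ring. }
apply rsum_le; intros l Hl. destruct (Nat.eq_dec l i).
- subst. rewrite (G_diag d n) by auto. replace (w i * 1 - w i) with 0 by ring. rewrite Rabs_R0. lra.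
- replace (w l * G d Phi l i - 0) with (w l * G d Phi l i) by ring. rewrite Rabs_mult.
  pose proof (G_off d n Phi l i Hl Hi n0). pose proof (Rabs_pos (w l)). fold mu in H.
  rewrite Rminus_0_r, (Rmult_comm mu). apply Rmult_le_compat_l; auto. Qed.

Lemma fobj_eq d n Phi y x : fobj d n Phi y x = / 2 * ip d (vsub y (mulv n Phi x)) (vsub y (mulv n Phi x)).
Proof. unfold fobj. rewrite norm2_sq. reflexivity. Qed.

Lemma resid n Phi xs xk : vsub (mulv n Phi xs) (mulv n Phi xk) = mulv n Phi (vsub xs xk).
Proof. apply functional_extensionality; intro i. unfold vsub, mulv. rewrite <- rsum_minus.
apply rsum_ext; intros; ring. Qed.

Lemma step d n Phi m xs y beta xk xk1 :
  dictionary d n Phi -> (1 <= m)%nat -> (2 * INR m - 1) * coherence d n Phi < 1 ->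
  (l0 n xs <= m)%nat -> y = mulv n Phi xs -> 0 < beta -> norm1 n xs <= beta ->
  (forall j, (j<n)%nat -> xs j = 0 -> xk j = 0) -> norm1 n xk <= beta ->
  fw_step d n Phi y beta xk xk1 ->
  ((forall j, (j<n)%nat -> xs j = 0 -> xk1 j = 0) /\ norm1 n xk1 <= beta) /\
  forall g, 0 <= g <= 1 ->
    fobj d n Phi y xk1 <= fobj d n Phi y xk - 2 * g * fobj d n Phi y xk + 2 * g^2 * beta^2.
Proof.
intros Hd Hm Hmu Hl0 Hy Hb Hxs Hsupp Hnk Hstep.
set (mu := coherence d n Phi) in *.
assert (Hmu0 : 0 <= mu) by apply rmax_ge0.
assert (HmR : 1 <= INR m) by (replace 1 with (INR 1) by reflexivity; apply le_INR; auto).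
assert (Hmu1 : mu <= 1) by nra.
destruct Hstep as [ik [sg [gam [Hik [Hmax [Hsg [Hpos [Hneg Hrest]]]]]]]].
cbv zeta in Hrest. destruct Hrest as [Hgam [Hmin Hx]].
set (sk := fun j => sg * beta * e_vec ik j) in *.
set (upd := fun g j => xk j + g * (sk j - xk j)) in *.
set (D := fun j => sk j - xk j).
set (w := vsub xs xk).
assert (Hr : vsub y (mulv n Phi xk) = mulv n Phi w) by (subst y; apply resid).
rewrite Hr in Hmax, Hpos, Hneg.
set (r := mulv n Phi w) in *.
set (c := fun j => ip d (col Phi j) r) in *.
set (P := mulv n Phi D).
assert (Hmin' : forall g, 0 <= g <= 1 -> fobj d n Phi y (upd gam) <= fobj d n Phi y (upd g)) by exact Hmin.
assert (Hx' : xk1 = upd gam) by exact Hx. clear Hmin Hx. rename Hmin' into Hmin. rename Hx' into Hx.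

assert (Hexp : forall g, fobj d n Phi y (upd g) = / 2 * (ip d r r - 2 * g * ip d P r + g^2 * ip d P P)).
{ intro g. rewrite fobj_eq.
  assert (E : vsub y (mulv n Phi (upd g)) = fun i => r i - g * P i).
  { apply functional_extensionality; intro i. subst y. unfold vsub, r, P, mulv, upd, w, D, vsub.
    rewrite <- rsum_scal, <- !rsum_minus. apply rsum_ext; intros; ring. }
  rewrite E. unfold ip. f_equal.
  rewrite <- !rsum_scal, <- rsum_minus, <- rsum_plus. apply rsum_ext; intros; ring. }
assert (Hf0 : fobj d n Phi y xk = / 2 * ip d r r) by (rewrite fobj_eq, Hr; reflexivity).
assert (Hsc : rsum n (fun j => sk j * c j) = sg * beta * c ik).
{ rewrite <- (rsum_evec n ik (fun j => sg * beta * c j)) by auto. apply rsum_ext; intros; unfold sk; ring. }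
assert (HPr : ip d P r = sg * beta * c ik - rsum n (fun j => xk j * c j)).
{ unfold P. rewrite ip_mulv. fold c. rewrite <- Hsc, <- rsum_minus. apply rsum_ext; intros; unfold D, c; ring. }
assert (Hrr : ip d r r = rsum n (fun j => xs j * c j) - rsum n (fun j => xk j * c j)).
{ unfold r at 1. rewrite ip_mulv. fold c. rewrite <- rsum_minus. apply rsum_ext; intros; unfold w, vsub, c; ring. }
assert (Hsgc : sg * c ik = Rabs (c ik)).
{ destruct (Rlt_le_dec 0 (c ik)). rewrite Hpos by auto. rewrite Rabs_right; lra.
  destruct (Rlt_le_dec (c ik) 0). rewrite Hneg by auto. rewrite Rabs_left; lra.
  assert (c ik = 0) by lra. rewrite H, Rabs_R0. ring. }
assert (Hxsc : rsum n (fun j => xs j * c j) <= norm1 n xs * Rabs (c ik)).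
{ unfold norm1. rewrite <- rsum_scalr. apply rsum_le; intros j Hj.
  pose proof (Hmax j Hj). fold c in H. pose proof (Rle_abs (xs j * c j)). rewrite Rabs_mult in H0.
  pose proof (Rabs_pos (xs j)). pose proof (Rabs_pos (c j)).
  assert (Rabs (xs j) * Rabs (c j) <= Rabs (xs j) * Rabs (c ik)) by (apply Rmult_le_compat_l; auto). lra. }
assert (Hgap : ip d r r <= ip d P r).
{ rewrite HPr, Hrr. replace (sg * beta * c ik) with (beta * (sg * c ik)) by ring. rewrite Hsgc.
  pose proof (Rabs_pos (c ik)). nra. }
assert (Hskabs : forall j, Rabs (sk j) = e_vec ik j * beta).
{ intro j. unfold sk, e_vec. destruct (Nat.eq_dec j ik).
  - rewrite !Rmult_1_r, Rabs_mult, (Rabs_right beta) by lra.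
    assert (Rabs sg = 1) by (destruct Hsg as [-> | ->]; [apply Rabs_R1| rewrite Rabs_left; lra]).
    rewrite H; ring.
  - rewrite Rmult_0_r, Rmult_0_l, Rabs_R0. ring. }
assert (Hn1s : rsum n (fun j => Rabs (sk j)) = beta).
{ rewrite (rsum_ext n _ (fun j => e_vec ik j * (fun _ => beta) j)). apply rsum_evec; auto.
  intros; apply Hskabs. }
assert (HPP : ip d P P <= 4 * beta^2).
{ unfold P. eapply Rle_trans; [apply QUB; auto|].
  assert (sA1 n D <= rsum n (fun j => Rabs (sk j)) + norm1 n xk).
  { unfold norm1, sA1. rewrite <- rsum_plus. apply rsum_le; intros. unfold D.
    pose proof (Rabs_triang (sk j) (- xk j)). rewrite Rabs_Ropp in H0. unfold Rminus. lra. }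
  assert (0 <= sA1 n D) by (apply rsum_ge0; intros; apply Rabs_pos). nra. }
split.
2:{ intros g Hg. rewrite Hx, Hexp, Hf0. pose proof (Hmin g Hg). rewrite Hexp in H.
    pose proof (ip_ge0 d r). assert (g * ip d r r <= g * ip d P r) by (apply Rmult_le_compat_l; lra).
    assert (g^2 * ip d P P <= g^2 * (4*beta^2)) by (apply Rmult_le_compat_l; nra).
    rewrite Hexp in H. lra. }
assert (Hkey : xs ik <> 0 \/ gam = 0).
{ destruct (classic (exists j, (j<n)%nat /\ w j <> 0)) as [[j0 [Hj0 Hw0]] | Hno].
  - left. intro Hik0.
    destruct (argmax n (fun j => Rabs (w j)) ltac:(lia)) as [i [Hi Hia]].
    set (M := Rabs (w i)).
    assert (HM : 0 < M). { pose proof (Hia j0 Hj0). pose proof (Rabs_pos_lt _ Hw0). unfold M; lra. }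
    assert (HA : sA1 n w <= INR m * M).
    { eapply Rle_trans. apply l0_bound. apply Hia. apply Rabs_pos.
      apply Rmult_le_compat_r. lra. apply le_INR.
      eapply Nat.le_trans; [|apply Hl0]. apply l0_sub. intros j Hj H0. unfold w, vsub. rewrite H0, Hsupp; auto; ring. }
    pose proof (erc_in d n Phi w i Hd Hi). fold mu in H. fold r in H.
    assert (Hwik : w ik = 0) by (unfold w, vsub; rewrite Hik0, Hsupp; auto; ring).
    pose proof (erc_out d n Phi w ik Hik Hwik). fold mu r in H0.
    pose proof (Hmax i Hi). fold c in H1. unfold c in H1. fold M in H.
    assert ((1 + mu) * M <= 2 * mu * sA1 n w) by lra.
    assert (mu * sA1 n w <= mu * (INR m * M)) by (apply Rmult_le_compat_l; auto).
    nra.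
  - assert (Hw0 : forall j, (j<n)%nat -> w j = 0).
    { intros j Hj. destruct (Req_dec (w j) 0); auto. exfalso; apply Hno; eauto. }
    assert (Hr0 : r = fun _ => 0).
    { apply functional_extensionality; intro i. unfold r, mulv. apply rsum_zero; intros. rewrite Hw0; auto; ring. }
    assert (HR0 : ip d r r = 0) by (unfold ip; apply rsum_zero; intros; rewrite Hr0; ring).
    assert (HP0 : ip d P r = 0) by (unfold ip; apply rsum_zero; intros; rewrite Hr0; ring).
    destruct (Req_dec gam 0) as [|Hg0]; [right; auto|].
    pose proof (Hmin 0 ltac:(lra)). rewrite !Hexp, HR0, HP0 in H.
    assert (HPP0 : ip d P P <= 0).
    { pose proof (ip_ge0 d P). destruct (Rle_dec (ip d P P) 0); auto.
      assert (0 < gam^2) by (apply pow_lt; lra). nra. }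
    left. intro Hik0.
    pose proof (QLB d n Phi D Hd). fold mu P in H0.
    pose proof (cs_l0 n D). fold (sA1 n D) (sQ2 n D) in H1.
    assert (Hl0D : (l0 n D <= S m)%nat).
    { eapply Nat.le_trans; [|apply le_n_S, Hl0]. apply (l0_sub1 n D xs ik).
      intros j Hj Hjik Hxj. unfold D, sk, e_vec. destruct (Nat.eq_dec j ik); [contradiction|].
      rewrite Hsupp; auto; ring. }
    assert (HQ : beta^2 <= sQ2 n D).
    { replace (beta^2) with (D ik * D ik). apply (rsum_ge_term n (fun j => D j * D j)); auto. intros; nra.
      unfold D, sk, e_vec. destruct (Nat.eq_dec ik ik); [|contradiction]. rewrite Hsupp; auto.
      destruct Hsg as [-> | ->]; ring. }
    assert (0 <= sQ2 n D) by (apply rsum_ge0; intros; nra).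
    assert (INR (l0 n D) <= INR m + 1) by (rewrite <- S_INR; apply le_INR; auto).
    assert (sA1 n D ^2 <= (INR m + 1) * sQ2 n D) by nra.
    assert (mu * sA1 n D ^2 <= mu * ((INR m + 1) * sQ2 n D)) by (apply Rmult_le_compat_l; auto).
    assert (0 < beta^2) by (apply pow_lt; lra).
    assert ((1 - mu * INR m) * sQ2 n D <= 0) by nra.
    assert (0 < 1 - mu * INR m) by nra.
    nra. }
split.
- intros j Hj Hxj. rewrite Hx. unfold upd. rewrite (Hsupp j Hj Hxj).
  destruct Hkey as [Hk | Hk].
  + unfold sk, e_vec. destruct (Nat.eq_dec j ik) as [->|]; [contradiction|ring].
  + rewrite Hk; ring.
- rewrite Hx. unfold norm1, upd.
  apply Rle_trans with (rsum n (fun j => (1 - gam) * Rabs (xk j) + gam * Rabs (sk j))).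
  + apply rsum_le; intros. replace (xk j + gam * (sk j - xk j)) with ((1-gam) * xk j + gam * sk j) by ring.
    eapply Rle_trans; [apply Rabs_triang|]. rewrite !Rabs_mult, (Rabs_right gam), (Rabs_right (1-gam)) by lra. lra.
  + rewrite rsum_plus, !rsum_scal, Hn1s. unfold norm1 in Hnk. nra.
Qed.

Theorem corollary1 (d n : nat) (Phi : nat -> nat -> R) (m : nat)
    (xs y : nat -> R) (beta : R) (x : nat -> nat -> R) :
  dictionary d n Phi ->
  (1 <= m)%nat ->
  (2 * INR m - 1) * coherence d n Phi < 1 ->
  (l0 n xs <= m)%nat ->
  y = mulv n Phi xs ->
  0 < beta ->
  norm1 n xs <= beta ->
  fw_iterates d n Phi y beta x ->
  Un_cv (fun k => norm2 n (vsub (x k) xs)) 0.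
Proof.
intros Hd Hm Hmu Hl0 Hy Hb Hxs [Hx0 Hsteps].
set (mu := coherence d n Phi) in *.
assert (Hmu0 : 0 <= mu) by apply rmax_ge0.
assert (HmR : 1 <= INR m) by (replace 1 with (INR 1) by reflexivity; apply le_INR; auto).
assert (Hinv : forall k, (forall j, (j<n)%nat -> xs j = 0 -> x k j = 0) /\ norm1 n (x k) <= beta).
{ induction k.
  - rewrite Hx0. split; auto. unfold norm1. rewrite rsum_zero. lra. intros; apply Rabs_R0.
  - destruct IHk as [H1 H2].
    destruct (step d n Phi m xs y beta (x k) (x (S k)) Hd Hm Hmu Hl0 Hy Hb Hxs H1 H2 (Hsteps k)) as [H _].
    exact H. }
set (f := fun k => fobj d n Phi y (x k)).
assert (Hdec : forall k g, 0 <= g <= 1 -> f (S k) <= f k - 2 * g * f k + 2 * g^2 * beta^2).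
{ intros k. destruct (Hinv k) as [H1 H2].
  destruct (step d n Phi m xs y beta (x k) (x (S k)) Hd Hm Hmu Hl0 Hy Hb Hxs H1 H2 (Hsteps k)) as [_ H].
  exact H. }
assert (Hfpos : forall k, 0 <= f k).
{ intro k. unfold f. rewrite fobj_eq. pose proof (ip_ge0 d (vsub y (mulv n Phi (x k)))). lra. }
assert (Hmono : forall k, f (S k) <= f k).
{ intro k. pose proof (Hdec k 0 ltac:(lra)). lra. }
assert (Hmono' : forall N k, (N <= k)%nat -> f k <= f N).
{ intros N k Hk. induction Hk. lra. pose proof (Hmono m0). lra. }
assert (Hev : forall eps, 0 < eps -> exists N, f N < eps).
{ intros eps He. apply NNPP. intro Hno.
  assert (Hge : forall N, eps <= f N).
  { intro N. destruct (Rlt_le_dec (f N) eps); auto. exfalso; apply Hno; eauto. }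
  set (g := Rmin 1 (eps / (2 * beta^2))).
  assert (Hb2 : 0 < beta^2) by (apply pow_lt; lra).
  assert (Hg0 : 0 < g) by (unfold g; apply Rmin_pos; [lra| apply Rdiv_lt_0_compat; lra]).
  assert (Hg1 : g <= 1) by apply Rmin_l.
  assert (Hg2 : g <= eps / (2 * beta^2)) by apply Rmin_r.
  assert (Hgb : g * beta^2 <= eps / 2).
  { apply Rmult_le_compat_r with (r := beta^2) in Hg2; [|lra].
    replace (eps / (2 * beta ^ 2) * beta ^ 2) with (eps/2) in Hg2 by (field; lra). lra. }
  assert (Hstep : forall k, f (S k) <= f k - g * eps).
  { intro k. pose proof (Hdec k g ltac:(lra)). pose proof (Hge k).
    assert (g * f k >= g * eps) by (apply Rle_ge, Rmult_le_compat_l; lra).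
    assert (g^2 * beta^2 <= g * (eps/2)) by (replace (g^2*beta^2) with (g * (g*beta^2)) by ring;
       apply Rmult_le_compat_l; lra). lra. }
  assert (Hlin : forall k, f k <= f 0%nat - INR k * (g * eps)).
  { induction k. simpl; lra. rewrite S_INR. pose proof (Hstep k). lra. }
  destruct (archimed_cor1 (g * eps / (f 0%nat + 1))) as [K [HK1 HK2]].
  { apply Rdiv_lt_0_compat. nra. pose proof (Hfpos 0%nat); lra. }
  assert (0 < INR K) by (apply lt_0_INR; auto).
  pose proof (Hfpos 0%nat).
  assert (f 0%nat + 1 < INR K * (g * eps)).
  { apply Rmult_lt_compat_l with (r := INR K * (f 0%nat + 1)) in HK1; [|nra].
    replace (INR K * (f 0%nat + 1) * / INR K) with (f 0%nat + 1) in HK1 by (field; lra).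
    replace (INR K * (f 0%nat + 1) * (g * eps / (f 0%nat + 1))) with (INR K * (g * eps)) in HK1 by (field; lra).
    lra. }
  pose proof (Hlin K). pose proof (Hfpos K). lra. }
set (cc := 1 + mu - mu * INR m).
assert (Hcc : 0 < cc) by (unfold cc; nra).
assert (Hlow : forall k, cc * sQ2 n (vsub xs (x k)) <= 2 * f k).
{ intro k. unfold f. rewrite fobj_eq. rewrite Hy, resid.
  pose proof (QLB d n Phi (vsub xs (x k)) Hd). fold mu in H.
  pose proof (cs_l0 n (vsub xs (x k))). fold (sA1 n (vsub xs (x k))) (sQ2 n (vsub xs (x k))) in H0.
  assert (Hl : (l0 n (vsub xs (x k)) <= m)%nat).
  { eapply Nat.le_trans; [|apply Hl0]. apply l0_sub. intros j Hj H1. unfold vsub. rewrite H1.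
    destruct (Hinv k) as [H2 _]. rewrite H2; auto; ring. }
  apply le_INR in Hl.
  assert (0 <= sQ2 n (vsub xs (x k))) by (apply rsum_ge0; intros; nra).
  assert (sA1 n (vsub xs (x k)) ^ 2 <= INR m * sQ2 n (vsub xs (x k))) by nra.
  assert (mu * sA1 n (vsub xs (x k)) ^ 2 <= mu * (INR m * sQ2 n (vsub xs (x k)))) by (apply Rmult_le_compat_l; auto).
  unfold cc. lra. }
intros eps Heps.
destruct (Hev (cc * eps^2 / 2)) as [N HN].
{ assert (0 < eps^2) by (apply pow_lt; lra). apply Rdiv_lt_0_compat; nra. }
exists N. intros k Hk. unfold Rdist. rewrite Rminus_0_r.
assert (Hn : norm2 n (vsub (x k) xs) = sqrt (sQ2 n (vsub xs (x k)))).
{ unfold norm2, ip, sQ2. f_equal. apply rsum_ext; intros. unfold vsub; ring. }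
rewrite Hn, Rabs_right by (apply Rle_ge, sqrt_pos).
pose proof (Hmono' N k Hk). pose proof (Hlow k).
assert (0 <= sQ2 n (vsub xs (x k))) by (apply rsum_ge0; intros; nra).
assert (sQ2 n (vsub xs (x k)) < eps^2).
{ assert (cc * sQ2 n (vsub xs (x k)) < cc * eps^2) by lra.
  apply Rmult_lt_reg_l with cc; auto. }
rewrite <- (sqrt_pow2 eps) by lra. apply sqrt_lt_1_alt. lra.
Qed.
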